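(* Let $P$ be the group of order $32$ with GAP identifier ${\rm SmallGroup}(32,7)$ (of the form $(C_8\rtimes C_2)\rtimes C_2$), and let $M\le P$ be a maximal subgroup with $M\cong C_2\times D_8$. Then $\psi(P)=167$ and $\psi(M)=39$. Consequently, for every odd positive integer $m$, the group $G=P\times C_m$ and its maximal subgroup $H=M\times C_m$ satisfy $$\psi(G)=167\,\psi(C_m)\ >\ 156\,\psi(C_m)=\psi(H)\,|G:H|^2,$$ so the inequality $\psi(G)\le \psi(H)|G:H|^2$ fails for the subgroup $H\le G$.
   Context: All groups are finite. For a finite group $G$, $\psi(G)=\sum_{g\in G} o(g)$, where $o(g)$ is the order of $g$. $C_n$ denotes the cyclic group of order $n$ and $D_8$ the dihedral group of order $8$. ${\rm SmallGroup}(32,7)$ refers to the group numbered 7 among groups of order 32 in the GAP Small Groups Library; it has a maximal subgroup isomorphic to $C_2\times D_8$. *)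

(* Defs.v *)
From HB Require Import structures.
From mathcomp Require Import all_boot all_fingroup all_solvable.
From mathcomp Require Import zmodp.

Set Implicit Arguments.
Unset Strict Implicit.
Unset Printing Implicit Defensive.

Local Open Scope group_scope.

Definition psi (gT : finGroupType) (A : {set gT}) : nat := (\sum_(g in A) #[g])%N.

(* A concrete model of SmallGroup(32,7) = (C8 : C2) : C2, given by the       *)
(* presentation  < a, b, c | a^8 = b^2 = c^2 = 1, b a b = a^5,               *)
(*                           c a c = a b, b c = c b >.                       *)
(* The element (i, j, k) stands for the normal form a^i b^j c^k.            *)
(* Multiplication rules: b a^i = a^(5i) b, c b = b c, and                    *)
(* c a^i = (ab)^i c  with (ab)^(2m) = a^(6m), (ab)^(2m+1) = a^(6m+1) b.      *)

Definition sg32_7 : Type := ('I_8 * bool * bool)%type.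
HB.instance Definition _ := Finite.on sg32_7.

Definition sg_one : sg32_7 := (ord0, false, false).

Definition sg_mul (x y : sg32_7) : sg32_7 :=
  let: (i, j, k) := x in
  let: (i2, j2, k2) := y in
  let f := if k then (6 * (i2 %/ 2) + odd i2)%N else nat_of_ord i2 in
  let e := if k then odd i2 else false in
  (Ordinal (ltn_pmod (i + 5 ^ j * f) (isT : 0 < 8)) : 'I_8,
   addb j (addb e j2), addb k k2).

Definition sg_elts : seq sg32_7 :=
  [seq ((Ordinal (ltn_pmod p.1 (isT : 0 < 8)) : 'I_8), p.2.1, p.2.2)
  | p <- [seq (i, jk) | i <- iota 0 8,
          jk <- [:: (false, false); (false, true); (true, false); (true, true)]]].

Lemma sg_eltsP (x : sg32_7) : x \in sg_elts.
Proof.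
case: x => [[[i Hi] j] k].
do 8 (case: i Hi => [|i] Hi; first by case: j; case: k; vm_compute).
by [].
Qed.

Definition sg_inv (x : sg32_7) : sg32_7 :=
  nth sg_one sg_elts (find (fun y => sg_mul y x == sg_one) sg_elts).

Lemma sg_mulA_b :
  all (fun x => all (fun y => all (fun z =>
     sg_mul x (sg_mul y z) == sg_mul (sg_mul x y) z) sg_elts) sg_elts) sg_elts.
Proof. vm_compute. reflexivity. Qed.

Lemma sg_mulA : associative sg_mul.
Proof.
move=> x y z.
have /allP/(_ x (sg_eltsP x))/allP/(_ y (sg_eltsP y))/allP/(_ z (sg_eltsP z))/eqP
  := sg_mulA_b.
by [].
Qed.

Lemma sg_mul1_b : all (fun x => sg_mul sg_one x == x) sg_elts.
Proof. vm_compute. reflexivity. Qed.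

Lemma sg_mul1 : left_id sg_one sg_mul.
Proof. by move=> x; have /allP/(_ x (sg_eltsP x))/eqP := sg_mul1_b. Qed.

Lemma sg_mulV_b : all (fun x => sg_mul (sg_inv x) x == sg_one) sg_elts.
Proof. vm_compute. reflexivity. Qed.

Lemma sg_mulV : left_inverse sg_one sg_inv sg_mul.
Proof. by move=> x; have /allP/(_ x (sg_eltsP x))/eqP := sg_mulV_b. Qed.

HB.instance Definition _ :=
  Finite_isGroup.Build sg32_7 sg_mulA sg_mul1 sg_mulV.

Definition P32_7 : {group sg32_7} := [set: sg32_7]%G.

Definition sg_a : sg32_7 := (Ordinal (isT : 1 < 8), false, false).
Definition sg_b : sg32_7 := (ord0, true, false).
Definition sg_c : sg32_7 := (ord0, false, true).

Definition C2xD8 := setX (Zp 2) 'D_8.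

Lemma sg_relations :
  [&& sg_a ^+ 8 == 1, sg_b ^+ 2 == 1, sg_c ^+ 2 == 1,
      sg_b * sg_a * sg_b == sg_a ^+ 5, sg_c * sg_a * sg_c == sg_a * sg_b
    & sg_b * sg_c == sg_c * sg_b].
Proof. vm_compute. reflexivity. Qed.

(* Main.v *)
Require Import Defs.
From HB Require Import structures.
From mathcomp Require Import all_boot all_fingroup all_solvable.
From mathcomp Require Import zmodp.

Set Implicit Arguments.
Unset Strict Implicit.
Unset Printing Implicit Defensive.

Section Aux.
Local Open Scope group_scope.

Definition ordc (g : sg32_7) : nat :=
  (find (fun n => g ^+ n.+1 == 1) (iota 0 8)).+1.

Lemma ordc_b : all (fun g => (g ^+ ordc g == 1) &&
   all (fun k => g ^+ k.+1 != 1) (iota 0 (ordc g).-1)) sg_elts.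
Proof. vm_compute. reflexivity. Qed.

Lemma order_ordc g : #[g] = ordc g.
Proof.
have /allP/(_ g (sg_eltsP g))/andP[/eqP e1 /allP e2] := ordc_b.
have o0 : 0 < ordc g by [].
apply/eqP; rewrite eqn_leq dvdn_leq ?order_dvdn ?e1 //=.
rewrite leqNgt; apply/negP => lt.
have c : (#[g]).-1 \in iota 0 (ordc g).-1.
  rewrite mem_iota /= add0n -ltnS prednK ?order_gt0 //.
by have := e2 _ c; rewrite prednK ?order_gt0 // expg_order eqxx.
Qed.

Lemma sg_elts_uniq : uniq sg_elts.
Proof. vm_compute. reflexivity. Qed.

Lemma sum_elts (A : {set sg32_7}) (F : sg32_7 -> nat) (p : pred sg32_7) :
  A =i p -> (\sum_(g in A) F g = sumn [seq F g | g <- sg_elts & p g])%N.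
Proof.
move=> Ap.
rewrite (perm_big sg_elts); last first.
  apply: uniq_perm; first exact: index_enum_uniq.
    exact: sg_elts_uniq.
  by move=> x; rewrite mem_index_enum sg_eltsP.
rewrite (eq_bigl p) ?Ap // -big_filter sumnE big_map //.
Qed.

Lemma expg_pair (T1 T2 : finGroupType) (x : T1) (y : T2) n :
  (x, y) ^+ n = (x ^+ n, y ^+ n).
Proof. by elim: n => // n IH; rewrite !expgS IH. Qed.

Lemma order_pair (T1 T2 : finGroupType) (x : T1) (y : T2) :
  coprime #[x] #[y] -> #[(x, y)] = (#[x] * #[y])%N.
Proof.
move=> cop; apply/eqP; rewrite eqn_dvd Gauss_dvd // !order_dvdn expg_pair.
rewrite expgM expg_order expg1n mulnC expgM expg_order expg1n eqxx /=.
have := expg_order (x, y); rewrite expg_pair => -[-> ->].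
by rewrite !eqxx.
Qed.

Lemma card_P : #|P32_7| = 32.
Proof.
rewrite -sum1_card (@sum_elts _ _ predT); first by vm_compute.
by move=> x; rewrite inE.
Qed.

Lemma psi_P : psi P32_7 = 167.
Proof.
rewrite /psi (eq_bigr ordc); last by move=> g _; rewrite order_ordc.
rewrite (@sum_elts _ _ predT); first by vm_compute.
by move=> x; rewrite inE.
Qed.

Definition S4 : {set sg32_7} := [set g | g ^+ 4 == 1].

Lemma card_S4 : #|S4| = 16.
Proof.
rewrite -sum1_card (@sum_elts _ _ (fun g => g ^+ 4 == 1)); first by vm_compute.
by move=> g; rewrite inE.
Qed.

Lemma psi_S4 : psi S4 = 39.
Proof.
rewrite /psi (eq_bigr ordc); last by move=> g _; rewrite order_ordc.
rewrite (@sum_elts _ _ (fun g => g ^+ 4 == 1)); first by vm_compute.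
by move=> g; rewrite inE.
Qed.

Lemma exp_D8 (y : gsort 'D_8) : y ^+ 4 = 1.
Proof.
have isoG : ('D_(2 ^ 3))%G \isog 'D_(2 ^ 3) by exact: isog_refl.
have [[x z] genG _] := generators_2dihedral (isT : 1 < 3) isoG.
have [[_ inv _] _ _ _ _] := dihedral2_structure (isT : 1 < 3) genG isoG.
have [_ _ ox _] := genG.
apply/eqP; rewrite -order_dvdn.
case: (boolP (y \in <[x]>)) => Hy.
  by have := order_dvdG Hy; rewrite -orderE ox.
by rewrite inv // inE Hy inE.
Qed.

Lemma exp_C2xD8 : exponent C2xD8 %| 4.
Proof.
apply/exponentP => -[x y] /setXP[Hx _].
rewrite expg_pair exp_D8.
have := expg_cardG Hx; rewrite card_Zp // => e2.
by rewrite (_ : 4 = 2 * 2)%N // expgM e2 expg1n.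
Qed.

Lemma psi_setX (cT : finGroupType) (A : {set sg32_7}) (C : {group cT}) :
  odd #|C| -> psi (setX A C) = (psi A * psi C)%N.
Proof.
move=> oddC.
rewrite /psi big_distrl /=; symmetry.
under eq_bigr => g _ do rewrite big_distrr /=.
rewrite pair_big /=; symmetry.
apply: eq_big => [[x y]|[x y]]; first by rewrite in_setX.
rewrite in_setX => /andP[_ Hy]; rewrite order_pair //=.
have d1 : #[x] %| 2 ^ 5 by rewrite (_ : 2 ^ 5 = 32)%N // -card_P order_dvdG // inE.
have d2 : #[y] %| #|C| by rewrite order_dvdG.
apply: (coprime_dvdl d1); apply: (coprime_dvdr d2).
by rewrite coprime_pexpl // coprime2n.
Qed.

End Aux.

Theorem mainTheorem6 :
  psi P32_7 = 167 /\
  forall M : {group sg32_7}, maximal M P32_7 -> M \isog C2xD8 ->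
    psi M = 39 /\
    forall (cT : finGroupType) (C : {group cT}), cyclic C -> odd #|C| ->
      let G := setX P32_7 C in
      let H := setX M C in
      [/\ maximal H G,
          psi G = 167 * psi C,
          psi H * #|G : H|%g ^ 2 = 156 * psi C
        & psi H * #|G : H|%g ^ 2 < psi G].
Proof.
split; first exact: psi_P.
move=> M maxM isoM.
have pP : (2.-group P32_7)%g by rewrite /pgroup card_P.
have iM := p_maximal_index pP maxM.
have cM : #|M| = 16.
  have := Lagrange (proper_sub (maxgroupp maxM)); rewrite iM card_P.
  by move=> h; apply/eqP; rewrite -(eqn_pmul2r (isT : 0 < 2)) h.
have MS : M \subset S4.
  apply/subsetP => m Hm; rewrite inE -order_dvdn.
  apply: dvdn_trans (dvdn_exponent Hm) _.
  by rewrite (exponent_isog isoM) exp_C2xD8.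
have eMS : M =i S4 by apply/subset_cardP => //; rewrite cM card_S4.
have psiM : psi M = 39 by rewrite -psi_S4 /psi (eq_bigl _ _ eMS).
split=> // cT C _ oddC G H.
have HG : H \subset G by rewrite /H /G setXS // (proper_sub (maxgroupp maxM)).
have iHG : #|G : H|%g = 2.
  rewrite -divgS // /G /H !cardsX card_P cM.
  rewrite (_ : 32 * #|C| = 2 * (16 * #|C|))%N; last by rewrite mulnA.
  by rewrite mulnK // muln_gt0 cardG_gt0.
have pC : 0 < psi C.
  by rewrite /psi (bigD1 1%g) //= order1.
have psiG : psi G = 167 * psi C by rewrite psi_setX // psi_P.
have psiH : psi H = 39 * psi C by rewrite psi_setX // psiM.
split.
- by apply: p_index_maximal => //; rewrite iHG.
- exact: psiG.
- by rewrite psiH iHG mulnC mulnA.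
- by rewrite psiH iHG psiG mulnC mulnA ltn_pmul2r.
Qed.
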